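(* Assume (A7) and (A8) of the context. Then for every $\delta\in\mathbb{R}^D$ with $\|\delta\|\le\|\theta^*\|$, with probability $1-\delta_{n_q}$, $$\Lambda_{\min}\big[\nabla^2_{\theta_S}\ell(\theta^*+\delta)\big]\ge\frac{D_{\min,2}}{C_{\mathrm{ratio}}^2},$$ where $\nabla^2_{\theta_S}\ell$ is the submatrix of the Hessian of $\ell$ with rows and columns indexed by the blocks in $S$.
   Context: Let $E=\{(u,v):1\le v\le u\le m\}$, $D=b|E|$, $\psi:\mathbb{R}^2\to\mathbb{R}^b$, and $f:\mathbb{R}^m\to\mathbb{R}^D$ the concatenation of the blocks $f_t(x)=\psi(x_u,x_v)$, $t=(u,v)\in E$; $f_S$ is the subvector of blocks in $S$. $P,Q$ distributions on $\mathbb{R}^m$ with densities $p,q$; samples $x_p^{(1..n_p)}$ i.i.d. $P$, $x_q^{(1..n_q)}$ i.i.d. $Q$. $r(x;\theta)=\exp(\theta^\top f(x))/N(\theta)$, $N(\theta)=\mathbb{E}_Q[\exp(\theta^\top f(x))]$; $\hat N(\theta)=\frac1{n_q}\sum_i\exp(\theta^\top f(x_q^{(i)}))$; $\hat r(x;\theta)=\exp(\theta^\top f(x))/\hat N(\theta)$; $\ell(\theta)=-\frac1{n_p}\sum_i\theta^\top f(x_p^{(i)})+\log\hat N(\theta)$. $\theta^*$ is the true parameter ($p=q\,r(\cdot;\theta^* )$), $S=\{t:\theta^*_t\ne0\}$. $\|\cdot\|$: Euclidean/spectral norm; $\Lambda_{\min}$ smallest eigenvalue. (A7) For all $\delta$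 with $\|\delta\|\le\|\theta^*\|$ and all $x$: $0<C_{\min}\le r(x;\theta^*+\delta)\le C_{\max}<\infty$; moreover $\frac1{C_{\mathrm{ratio}}}\le\hat r(x;\theta^*+\delta)\le C_{\mathrm{ratio}}$ and $\|f_t(x)\|\le C_{f_t,\max}$ for constants. (A8) With probability 1: $\max_{t\in E}\frac1{n_q}\sum_i\|f_t(x_q^{(i)})\|\le D_{\max,1}<\infty$, $\|\frac1{n_q}\sum_if(x_q^{(i)})f(x_q^{(i)})^\top\|\le D_{\max,2}$ and $\|\widehat{\mathrm{Cov}}_q[f]\|\le D_{\max,2}<\infty$; with probability $1-\delta_{n_q}$, $\Lambda_{\min}(\widehat{\mathrm{Cov}}_q[f_S])\ge D_{\min,2}>0$; $\widehat{\mathrm{Cov}}_q$ is the sample covariance over the $Q$-sample. *)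

(* Defs.v *)
From HB Require Import structures.
From mathcomp Require Import all_boot all_order all_algebra.
From mathcomp Require Import all_classical all_reals all_analysis.
Set Implicit Arguments. Unset Strict Implicit. Unset Printing Implicit Defensive.
Import Order.TTheory GRing.Theory Num.Theory.
Import numFieldNormedType.Exports.
Local Open Scope classical_set_scope.
Local Open Scope ring_scope.

Definition edge (m : nat) := {p : 'I_m * 'I_m | (p.2 <= p.1)%N}.
Definition nE (m : nat) : nat := #|{: edge m}|.
Definition edge_of (m : nat) (t : 'I_(nE m)) : edge m := enum_val t.

(* Parameters theta in R^D, D = b |E|, stored as an |E| x b matrix:
   row t = block theta_t. *)
Definition par (R : realType) (m b : nat) := 'M[R]_(nE m, b).

Definition feat (R : realType) (m b : nat) (psi : R -> R -> 'rV[R]_b)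
  (x : m.-tuple R) : par R m b :=
  \matrix_(t, c) psi (tnth x (val (edge_of t)).1) (tnth x (val (edge_of t)).2) 0 c.

Definition dotp (R : realType) (p q : nat) (A B : 'M[R]_(p, q)) : R :=
  \sum_(t < p) \sum_(c < q) A t c * B t c.
Definition enorm (R : realType) (p q : nat) (A : 'M[R]_(p, q)) : R :=
  Num.sqrt (dotp A A).

Definition Npop (R : realType) (m b : nat) (psi : R -> R -> 'rV[R]_b)
  (Q : probability (m.-tuple R) R) (th : par R m b) : R :=
  fine (\int[Q]_x (expR (dotp th (feat psi x)))%:E)%E.
Definition rpop (R : realType) (m b : nat) (psi : R -> R -> 'rV[R]_b)
  (Q : probability (m.-tuple R) R) (th : par R m b) (x : m.-tuple R) : R :=
  expR (dotp th (feat psi x)) / Npop psi Q th.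

Definition Nhat (R : realType) (m b nq : nat) (psi : R -> R -> 'rV[R]_b)
  (xs : 'I_nq -> m.-tuple R) (th : par R m b) : R :=
  (\sum_(i < nq) expR (dotp th (feat psi (xs i)))) / nq%:R.
Definition rhat (R : realType) (m b nq : nat) (psi : R -> R -> 'rV[R]_b)
  (xs : 'I_nq -> m.-tuple R) (th : par R m b) (x : m.-tuple R) : R :=
  expR (dotp th (feat psi x)) / Nhat psi xs th.

Definition loss (R : realType) (m b np nq : nat) (psi : R -> R -> 'rV[R]_b)
  (xps : 'I_np -> m.-tuple R) (xqs : 'I_nq -> m.-tuple R) (th : par R m b) : R :=
  - ((\sum_(i < np) dotp th (feat psi (xps i))) / np%:R) + ln (Nhat psi xqs th).

Definition supp (R : realType) (p q : nat) (th : 'M[R]_(p, q)) : {set 'I_p} :=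
  [set t | row t th != 0].

Definition Sidx (p q : nat) (S : {set 'I_p}) := {tc : 'I_p * 'I_q | tc.1 \in S}.

Definition hessian (R : realType) (p q : nat) (g : 'M[R]_(p, q) -> R)
  (th : 'M[R]_(p, q)) (i j : 'I_p * 'I_q) : R :=
  'D_(delta_mx j.1 j.2) ('D_(delta_mx i.1 i.2) g) th.

Definition mxOf (R : realType) (I : finType) (M : I -> I -> R) : 'M[R]_#|I| :=
  \matrix_(i, j) M (enum_val i) (enum_val j).

Definition lambda_min (R : realType) (n : nat) (A : 'M[R]_n) : R :=
  inf [set a : R | eigenvalue A a].
Definition lambda_max (R : realType) (n : nat) (A : 'M[R]_n) : R :=
  sup [set a : R | eigenvalue A a].
Definition specnorm (R : realType) (n : nat) (A : 'M[R]_n) : R :=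
  Num.sqrt (lambda_max (A^T *m A)).

Definition smean (R : realType) (I : finType) (n : nat) (g : 'I_n -> I -> R)
  (i : I) : R := (\sum_(k < n) g k i) / n%:R.
Definition scov (R : realType) (I : finType) (n : nat) (g : 'I_n -> I -> R)
  (i j : I) : R :=
  (\sum_(k < n) (g k i - smean g i) * (g k j - smean g j)) / n%:R.
Definition smom2 (R : realType) (I : finType) (n : nat) (g : 'I_n -> I -> R)
  (i j : I) : R := (\sum_(k < n) g k i * g k j) / n%:R.

Definition fvec (R : realType) (m b : nat) (psi : R -> R -> 'rV[R]_b)
  (x : m.-tuple R) (i : 'I_(nE m) * 'I_b) : R := feat psi x i.1 i.2.
Definition fvecS (R : realType) (m b : nat) (psi : R -> R -> 'rV[R]_b)
  (S : {set 'I_(nE m)}) (x : m.-tuple R) (i : Sidx b S) : R := fvec psi x (val i).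

Definition mutually_independent (d : measure_display) (Omega : measurableType d)
  (R : realType) (Pr : probability Omega R) (I : finType)
  (d' : measure_display) (T : measurableType d') (X : I -> Omega -> T) : Prop :=
  forall A : I -> set T, (forall i, measurable (A i)) ->
    fine (Pr (\bigcap_(i in [set: I]) (X i @^-1` A i))) =
    \prod_(i : I) fine (Pr (X i @^-1` A i)).

Definition joint_sample (T Omega : Type) (np nq : nat)
  (xp : 'I_np -> Omega -> T) (xq : 'I_nq -> Omega -> T)
  (s : 'I_np + 'I_nq) : Omega -> T :=
  match s with inl i => xp i | inr j => xq j end.

(* Main.v *)
Require Import Defs.
From HB Require Import structures.
From mathcomp Require Import all_boot all_order all_algebra.
From mathcomp Require Import all_classical all_reals all_analysis.
From mathcomp Require Import complex spectral sesquilinear ring lra.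
Set Implicit Arguments. Unset Strict Implicit. Unset Printing Implicit Defensive.
Import Order.TTheory GRing.Theory Num.Theory.
Import numFieldNormedType.Exports.
Local Open Scope classical_set_scope.
Local Open Scope ring_scope.

Section Calc.
Variable R : realType.

Lemma D_line (V : normedModType R) (f : V -> R) (a v : V) :
  'D_v f a = 'D_1 (fun h : R => f (h *: v + a)) 0.
Proof.
rewrite /derive scale0r add0r.
have E : (fun h : R => h^-1 *: ((f \o shift a) (h *: v) - f a)) =
  (fun h : R => h^-1 *: (((fun h : R => f (h *: v + a)) \o shift 0) (h *: 1) - f a)).
  apply/funext => h /=; rewrite /shift /= addr0.
  by rewrite [h *: 1]mulr1.
by rewrite E.
Qed.

Lemma isd_ext (f g : R -> R) (x df : R) : (forall h, f h = g h) ->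
  is_derive x (1:R) f df -> is_derive x (1:R) g df.
Proof. by move=> /funext ->. Qed.

Lemma isd_aff (x a b : R) : is_derive x (1:R) (fun h => h * a + b) a.
Proof.
apply: (@isd_ext (a *: (id : R -> R) + cst b)); first by move=> h /=; rewrite mulrC.
apply: (@is_derive_eq _ _ _ _ _ _ _ (a *: (1:R) + 0)); last by rewrite scaler1 addr0.
Qed.

Lemma isd_expaff (x a b : R) :
  is_derive x (1:R) (fun h => expR (h * a + b)) (expR (x * a + b) * a).
Proof.
apply: (@isd_ext (expR \o (fun h => h * a + b))) => //.
apply: is_derive1_comp; exact: isd_aff.
Qed.

Lemma isd_sum n (f : 'I_n -> R -> R) (df : 'I_n -> R) (x : R) :
  (forall k, is_derive x (1:R) (f k) (df k)) ->
  is_derive x (1:R) (fun h => \sum_(k < n) f k h) (\sum_(k < n) df k).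
Proof.
move=> H; apply: (@isd_ext (\sum_(k < n) f k)); first by move=> h; rewrite fct_sumE.
Qed.

Lemma isd_ln (g : R -> R) (x dg : R) : 0 < g x ->
  is_derive x (1:R) g dg -> is_derive x (1:R) (fun h => ln (g h)) ((g x)^-1 * dg).
Proof.
move=> gx H; apply: (@isd_ext (@ln R \o g)) => //.
have := is_derive1_ln gx => H2.
exact: is_derive1_comp.
Qed.

Lemma isd_divc (g : R -> R) (x dg c : R) :
  is_derive x (1:R) g dg -> is_derive x (1:R) (fun h => g h / c) (dg / c).
Proof.
move=> H; apply: (@isd_ext (c^-1 *: g)); first by move=> h /=; rewrite mulrC.
apply: (@is_derive_eq _ _ _ _ _ _ _ (c^-1 *: dg)); last by rewrite /= mulrC.
Qed.

Lemma isd_add (f g : R -> R) (x df dg : R) :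
  is_derive x (1:R) f df -> is_derive x (1:R) g dg ->
  is_derive x (1:R) (fun h => f h + g h) (df + dg).
Proof. move=> H1 H2; apply: (@isd_ext (f + g)) => //. Qed.

Lemma isd_opp (f : R -> R) (x df : R) :
  is_derive x (1:R) f df -> is_derive x (1:R) (fun h => - f h) (- df).
Proof. move=> H1; apply: (@isd_ext (- f)) => //. Qed.

Lemma isd_mul (f g : R -> R) (x df dg : R) :
  is_derive x (1:R) f df -> is_derive x (1:R) g dg ->
  is_derive x (1:R) (fun h => f h * g h) (f x * dg + g x * df).
Proof. move=> H1 H2; apply: (@isd_ext (f * g)) => //. Qed.

Lemma isd_inv (f : R -> R) (x df : R) : f x != 0 ->
  is_derive x (1:R) f df -> is_derive x (1:R) (fun h => (f h)^-1) (- (f x)^-2 * df).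
Proof. move=> H0 H1; exact: is_deriveV. Qed.

Lemma isd_cmul (g : R -> R) (x dg c : R) :
  is_derive x (1:R) g dg -> is_derive x (1:R) (fun h => c * g h) (c * dg).
Proof.
move=> H; apply: (@isd_ext (c *: g)); first by move=> h /=.
Qed.

Lemma isd_cst (x c : R) : is_derive x (1:R) (fun _ => c) 0.
Proof. apply: (@isd_ext (cst c)) => //. Qed.
End Calc.
Section Hess.
Variable R : realType.
Variables (p q n np : nat) (F : 'I_n -> 'M[R]_(p, q)) (G : 'I_np -> 'M[R]_(p, q)).

Lemma dotp_lin (h : R) (v a B : 'M[R]_(p, q)) :
  dotp (h *: v + a) B = h * dotp v B + dotp a B.
Proof.
rewrite /dotp mulr_sumr -big_split /=; apply: eq_bigr => t _.
rewrite mulr_sumr -big_split /=; apply: eq_bigr => c _.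
by rewrite !mxE mulrDl mulrA.
Qed.

Lemma dotp_delta (i : 'I_p) (j : 'I_q) (B : 'M[R]_(p, q)) :
  dotp (delta_mx i j) B = B i j.
Proof.
rewrite /dotp (bigD1 i) //= [X in _ + X]big1 ?addr0 => [|t ti]; last first.
  by apply: big1 => c _; rewrite mxE (negbTE ti) mul0r.
rewrite (bigD1 j) //= big1 ?addr0 => [|c cj]; first by rewrite mxE !eqxx mul1r.
by rewrite mxE eqxx (negbTE cj) /= mul0r.
Qed.

Definition Lf (th : 'M[R]_(p, q)) : R :=
  - ((\sum_(k < np) dotp th (G k)) / np%:R) +
  ln ((\sum_(k < n) expR (dotp th (F k))) / n%:R).

Hypothesis n0 : (0 < n)%N.

Lemma sumexp_gt0 (g : 'I_n -> R) : 0 < \sum_(k < n) expR (g k).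
Proof.
rewrite (bigD1 (Ordinal n0)) //=; apply: ltr_pwDl; first exact: expR_gt0.
by apply: sumr_ge0 => k _; exact: expR_ge0.
Qed.

Definition D1f (i : 'I_p) (j : 'I_q) (th : 'M[R]_(p, q)) : R :=
  - ((\sum_(k < np) G k i j) / np%:R) +
  (\sum_(k < n) F k i j * expR (dotp th (F k))) / (\sum_(k < n) expR (dotp th (F k))).

Lemma D1E i j th : 'D_(delta_mx i j) Lf th = D1f i j th.
Proof.
rewrite D_line; apply: derive_val.
have E : (fun h : R => Lf (h *: delta_mx i j + th)) =
  (fun h => - ((\sum_(k < np) (h * G k i j + dotp th (G k))) / np%:R) +
     ln ((\sum_(k < n) expR (h * F k i j + dotp th (F k))) / n%:R)).
  apply/funext => h; rewrite /Lf; congr (- (_ / _) + ln (_ / _)).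
    by apply: eq_bigr => k _; rewrite dotp_lin dotp_delta.
  by apply: eq_bigr => k _; rewrite dotp_lin dotp_delta.
rewrite E; clear E.
have nR : (0 < n%:R :> R) by rewrite ltr0n.
have Dg := isd_divc (n%:R) (isd_sum (fun k => isd_expaff 0 (F k i j) (dotp th (F k)))).
have D := isd_add
  (isd_opp (isd_divc (np%:R) (isd_sum (fun k => isd_aff 0 (G k i j) (dotp th (G k))))))
  (@isd_ln R (fun h => (\sum_(k < n) expR (h * F k i j + dotp th (F k))) / n%:R) 0 _
     (divr_gt0 (sumexp_gt0 (fun k => 0 * F k i j + dotp th (F k))) nR) Dg).
apply: (is_derive_eq D).
rewrite /D1f; congr (_ + _).
rewrite [X in (X / _)^-1 * _](eq_bigr (fun k => expR (dotp th (F k)))) => [|k _]; last by rewrite mul0r add0r.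
rewrite [X in _ * (X / _)](eq_bigr (fun k => F k i j * expR (dotp th (F k)))) => [|k _]; last first.
  by rewrite mul0r add0r mulrC.
have := sumexp_gt0 (fun k => dotp th (F k)); set S := \sum_(k < n) _ => S0.
rewrite invf_div mulrC mulrA divfK //; exact: lt0r_neq0.
Qed.

Definition Hf (i : 'I_p) (j : 'I_q) (i2 : 'I_p) (j2 : 'I_q) (th : 'M[R]_(p, q)) : R :=
  (\sum_(k < n) F k i j * F k i2 j2 * expR (dotp th (F k))) / (\sum_(k < n) expR (dotp th (F k)))
  - (\sum_(k < n) F k i j * expR (dotp th (F k))) * (\sum_(k < n) F k i2 j2 * expR (dotp th (F k)))
    / (\sum_(k < n) expR (dotp th (F k))) ^+ 2.

Lemma D2E i j i2 j2 th : 'D_(delta_mx i2 j2) (D1f i j) th = Hf i j i2 j2 th.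
Proof.
rewrite D_line; apply: derive_val.
set c := - ((\sum_(k < np) G k i j) / np%:R).
have E : (fun h : R => D1f i j (h *: delta_mx i2 j2 + th)) =
  (fun h => c + (\sum_(k < n) F k i j * expR (h * F k i2 j2 + dotp th (F k))) *
     (\sum_(k < n) expR (h * F k i2 j2 + dotp th (F k)))^-1).
  apply/funext => h; rewrite /D1f; congr (_ + _ * _^-1).
    by apply: eq_bigr => k _; rewrite dotp_lin dotp_delta.
  by apply: eq_bigr => k _; rewrite dotp_lin dotp_delta.
rewrite E; clear E.
have DA := isd_sum (fun k => isd_cmul (F k i j) (isd_expaff 0 (F k i2 j2) (dotp th (F k)))).
have DB := isd_sum (fun k => isd_expaff 0 (F k i2 j2) (dotp th (F k))).
have DBi := @isd_inv R (fun h => \sum_(k < n) expR (h * F k i2 j2 + dotp th (F k))) 0 _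
   (lt0r_neq0 (sumexp_gt0 _)) DB.
have D := isd_add (isd_cst 0 c) (isd_mul DA DBi).
apply: (is_derive_eq D).
rewrite /Hf add0r.
rewrite [X in X * _ + _](eq_bigr (fun k => F k i j * expR (dotp th (F k)))) => [|k _]; last by rewrite mul0r add0r.
rewrite [X in _ * (_ * X) + _](eq_bigr (fun k => F k i2 j2 * expR (dotp th (F k)))) => [|k _]; last by rewrite mul0r add0r mulrC.
rewrite [X in _ + _ * X](eq_bigr (fun k => F k i j * F k i2 j2 * expR (dotp th (F k)))) => [|k _]; last by rewrite mul0r add0r [expR _ * _]mulrC mulrA.
have Z : \sum_(k < n) expR (0 * F k i2 j2 + dotp th (F k)) = \sum_(k < n) expR (dotp th (F k)).
  by apply: eq_bigr => k _; rewrite mul0r add0r.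
rewrite Z.
set S := \sum_(k < n) expR _; set A := \sum_(k < n) _; set B := \sum_(k < n) _; set C := \sum_(k < n) _.
rewrite mulNr mulrN addrC mulrC; congr (_ - _).
by rewrite [_ ^- 2 * _]mulrC mulrA.
Qed.
End Hess.

Section Spec.
Local Open Scope sesquilinear_scope.
Local Open Scope complex_scope.
Variable R : realType.
Variable n : nat.
Variable A : 'M[R]_n.
Hypothesis symA : A^T = A.

Local Notation toC := (real_complex R).
Definition Ac : 'M[R[i]]_n := map_mx toC A.

Lemma toC_real (x : R) : (x%:C : R[i]) \is Num.real.
Proof. by apply/complex_realP; exists x. Qed.

Lemma conj_toC (x : R) : Num.conj (x%:C : R[i]) = x%:C.
Proof. exact/conj_Creal/toC_real. Qed.

Lemma Ac_adj : Ac ^t* = Ac.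
Proof.
apply/matrixP => i j; rewrite !mxE conj_toC; congr (_ %:C); by rewrite -{1}symA mxE.
Qed.

Lemma Ac_herm : Ac \is hermsymmx.
Proof. by apply/is_hermitianmxP; rewrite expr0 scale1r Ac_adj. Qed.

Lemma Ac_normal : Ac \is normalmx.
Proof. exact: hermitian_normalmx Ac_herm. Qed.

Definition U := spectralmx Ac.
Definition dd := spectral_diag Ac.

Lemma AcE : Ac = U ^t* *m diag_mx dd *m U.
Proof.
rewrite -invmx_unitary; last exact: spectral_unitarymx.
exact/orthomx_spectralP/Ac_normal.
Qed.

Lemma UUt : U *m U ^t* = 1%:M.
Proof. exact/unitarymxP/spectral_unitarymx. Qed.

Lemma UtU : U ^t* *m U = 1%:M.
Proof.
rewrite -invmx_unitary; last exact: spectral_unitarymx.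
by rewrite mulVmx // spectral_unit.
Qed.

Definition dr (i : 'I_n) : R := complex.Re (dd 0 i).

Lemma ddE i : dd 0 i = (dr i)%:C.
Proof.
have /mxOverP H := hermitian_spectral_diag_real Ac_herm.
by rewrite /dr RRe_real //; exact: H.
Qed.


Lemma adjM m k l (X : 'M[R[i]]_(m, k)) (Y : 'M[R[i]]_(k, l)) : (X *m Y) ^t* = Y ^t* *m X ^t*.
Proof. by rewrite trmx_mul map_mxM. Qed.

Lemma adjK m k (X : 'M[R[i]]_(m, k)) : X ^t* ^t* = X.
Proof. exact: trmxCK. Qed.

Lemma quad_diag (w : 'rV[R[i]]_n) :
  (w *m diag_mx dd *m w ^t*) 0 0 = \sum_i (dr i)%:C * (w 0 i * Num.conj (w 0 i)).
Proof.
rewrite mul_mx_diag mxE; apply: eq_bigr => i _; rewrite !mxE ddE.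
by rewrite mulrCA mulrA.
Qed.

Lemma quad_id (w : 'rV[R[i]]_n) :
  (w *m w ^t*) 0 0 = \sum_i (w 0 i * Num.conj (w 0 i)).
Proof. by rewrite mxE; apply: eq_bigr => i _; rewrite !mxE. Qed.

Lemma quadC (z : 'rV[R[i]]_n) :
  (z *m Ac *m z ^t*) 0 0 =
  \sum_i (dr i)%:C * ((z *m U ^t*) 0 i * Num.conj ((z *m U ^t*) 0 i)).
Proof.
rewrite -quad_diag adjM adjK AcE !mulmxA.
by [].
Qed.

Lemma normC (z : 'rV[R[i]]_n) :
  (z *m z ^t*) 0 0 =
  \sum_i ((z *m U ^t*) 0 i * Num.conj ((z *m U ^t*) 0 i)).
Proof.
by rewrite -quad_id adjM adjK -mulmxA (mulmxA _ U) UtU mul1mx.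
Qed.


Lemma realC_adj (v : 'rV[R]_n) : (map_mx toC v) ^t* = map_mx toC v^T.
Proof. by apply/matrixP => i j; rewrite !mxE conj_toC. Qed.

Lemma quadR (v : 'rV[R]_n) :
  ((v *m A *m v^T) 0 0)%:C =
  \sum_i (dr i)%:C * ((map_mx toC v *m U ^t*) 0 i * Num.conj ((map_mx toC v *m U ^t*) 0 i)).
Proof.
rewrite -(quadC (map_mx toC v)) realC_adj.
have -> : map_mx toC v *m Ac *m map_mx toC v^T = map_mx toC (v *m A *m v^T) by rewrite !map_mxM.
by rewrite [in RHS]mxE.
Qed.

Lemma normR (v : 'rV[R]_n) :
  ((v *m v^T) 0 0)%:C =
  \sum_i ((map_mx toC v *m U ^t*) 0 i * Num.conj ((map_mx toC v *m U ^t*) 0 i)).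
Proof.
rewrite -(normC (map_mx toC v)) realC_adj.
have -> : map_mx toC v *m map_mx toC v^T = map_mx toC (v *m v^T) by rewrite !map_mxM.
by rewrite [in RHS]mxE.
Qed.

Lemma ray_gen (L : R) : (forall i, L <= dr i) ->
  forall v : 'rV[R]_n, L * (v *m v^T) 0 0 <= (v *m A *m v^T) 0 0.
Proof.
move=> HL v; rewrite -subr_ge0 -ler0c rmorphB rmorphM /= quadR normR.
rewrite mulr_sumr -sumrB; apply: sumr_ge0 => i _.
rewrite -mulrBl; apply: mulr_ge0; last exact: mul_conjC_ge0.
by rewrite -rmorphB ler0c subr_ge0.
Qed.

Lemma eig_dr i : eigenvalue A (dr i).
Proof.
have E1 : eigenvalue Ac (dd 0 i).
  apply/eigenvalueP; exists (row i U).
    have -> : row i U *m Ac = row i (U *m Ac) by rewrite row_mul.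
    rewrite AcE !mulmxA UUt mul1mx mul_diag_mx.
    by apply/rowP => j; rewrite !mxE.
  apply/negP => /eqP H0.
  have : row i (U *m U ^t*) = 0 by rewrite row_mul H0 mul0mx.
  rewrite UUt => /rowP /(_ i); rewrite !mxE eqxx /= => /eqP; by rewrite oner_eq0.
move: E1; rewrite ddE !eigenvalue_root_char /Ac -map_char_poly.
by rewrite fmorph_root.
Qed.

Lemma eig_ex : (0 < n)%N -> exists a, eigenvalue A a.
Proof. by move=> n0; exists (dr (Ordinal n0)); exact: eig_dr. Qed.

Lemma vv_gt0 (v : 'rV[R]_n) : v != 0 -> 0 < (v *m v^T) 0 0.
Proof.
move=> v0; rewrite mxE; have [j vj] : exists j, v 0 j != 0.
  apply/existsP; apply: contraR v0 => /existsPn H; apply/eqP/rowP => j.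
  by rewrite mxE; apply/eqP; rewrite -[_ == _]negbK H.
rewrite (bigD1 j) //= mxE; apply: ltr_pwDl.
  by rewrite -expr2 lt_def sqrf_eq0 vj sqr_ge0.
by apply: sumr_ge0 => k _; rewrite mxE -expr2 sqr_ge0.
Qed.

Lemma eig_lb a : eigenvalue A a -> - (\sum_i `|dr i|) <= a.
Proof.
move=> /eigenvalueP [v va v0].
have H := ray_gen (L := - (\sum_i `|dr i|)) _ v.
have : - (\sum_i `|dr i|) * (v *m v^T) 0 0 <= a * (v *m v^T) 0 0.
  rewrite (le_trans (H _)) // => [i|].
    rewrite lerNl; apply: (le_trans (ler_norm _)); rewrite normrN (bigD1 i) //= lerDl.
    by apply: sumr_ge0 => k _; rewrite normr_ge0.
  by rewrite va -scalemxAl mxE.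
by rewrite ler_pM2r // vv_gt0.
Qed.


Lemma eig_hlb : has_lbound [set a : R | eigenvalue A a].
Proof. by exists (- (\sum_i `|dr i|)) => a /= Ha; exact: eig_lb. Qed.

Lemma lmin_le i : lambda_min A <= dr i.
Proof. exact: (ge_inf eig_hlb (eig_dr i)). Qed.

Lemma ray (v : 'rV[R]_n) : lambda_min A * (v *m v^T) 0 0 <= (v *m A *m v^T) 0 0.
Proof. exact: ray_gen lmin_le v. Qed.

End Spec.

Section Scal.
Variable R : realType.
Variable K : nat.
Implicit Types (G p : 'I_K -> R).

Lemma sum_sq_shift G (c : R) :
  \sum_(k < K) (G k - c) ^+ 2 =
  \sum_(k < K) (G k - (\sum_(j < K) G j) / K%:R) ^+ 2 +
  K%:R * ((\sum_(j < K) G j) / K%:R - c) ^+ 2.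
Proof.
case: K G => [|K'] G.
  by rewrite !big_ord0 mul0r add0r.
set m := (\sum_(j < K'.+1) G j) / K'.+1%:R.
have Hm : \sum_(j < K'.+1) G j = K'.+1%:R * m.
  by rewrite /m mulrC divfK // pnatr_eq0.
have E : forall k, (G k - c) ^+ 2 = (G k - m) ^+ 2 + (2 * (m - c)) * G k + (c ^+ 2 - m ^+ 2).
  by move=> k; ring.
rewrite (eq_bigr _ (fun k _ => E k)) big_split big_split /= -mulr_sumr Hm.
rewrite sumr_const card_ord -[_ *+ _]mulr_natl.
ring.
Qed.

Lemma sum_sq_ge G (c : R) :
  \sum_(k < K) (G k - (\sum_(j < K) G j) / K%:R) ^+ 2 <= \sum_(k < K) (G k - c) ^+ 2.
Proof.
by rewrite [X in _ <= X](sum_sq_shift G c) lerDl mulr_ge0 // sqr_ge0.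
Qed.

Lemma wvar G p : \sum_(k < K) p k = 1 ->
  \sum_(k < K) p k * G k ^+ 2 - (\sum_(k < K) p k * G k) ^+ 2 =
  \sum_(k < K) p k * (G k - \sum_(j < K) p j * G j) ^+ 2.
Proof.
move=> p1; set mu := \sum_(j < K) p j * G j.
have E : forall k, p k * (G k - mu) ^+ 2 = p k * G k ^+ 2 - (2 * mu) * (p k * G k) + mu ^+ 2 * p k.
  by move=> k; ring.
rewrite (eq_bigr _ (fun k _ => E k)) big_split sumrB /= -!mulr_sumr p1 -/mu.
ring.
Qed.

Lemma var_ineq G p (a : R) : 0 <= a -> \sum_(k < K) p k = 1 -> (forall k, a <= p k) ->
  a * \sum_(k < K) (G k - (\sum_(j < K) G j) / K%:R) ^+ 2 <=
  \sum_(k < K) p k * G k ^+ 2 - (\sum_(k < K) p k * G k) ^+ 2.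
Proof.
move=> a0 p1 ap; rewrite wvar //.
apply: (le_trans (ler_wpM2l a0 (sum_sq_ge G (\sum_(j < K) p j * G j)))).
rewrite mulr_sumr; apply: ler_sum => k _.
by apply: ler_wpM2r => //; exact: sqr_ge0.
Qed.
End Scal.
Section QF.
Variable R : realType.
Variable I : finType.

Lemma sum_enum (F : I -> R) : \sum_(j < #|I|) F (enum_val j) = \sum_(x : I) F x.
Proof. by rewrite [RHS](reindex (@enum_val I I)) //; apply: onW_bij; exact: enum_val_bij. Qed.

Lemma qf_mxOf (M : I -> I -> R) (v : 'rV[R]_#|I|) :
  (v *m mxOf M *m v^T) 0 0 =
  \sum_(x : I) \sum_(y : I) v 0 (enum_rank x) * v 0 (enum_rank y) * M x y.
Proof.
rewrite [RHS]exchange_big /= mxE -sum_enum; apply: eq_bigr => j _.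
rewrite !mxE mulr_suml -sum_enum; apply: eq_bigr => i _.
by rewrite !mxE !enum_valK mulrAC mulrC mulrA.
Qed.

Lemma bil (u a b : I -> R) :
  \sum_x \sum_y u x * u y * (a x * b y) = (\sum_x u x * a x) * (\sum_y u y * b y).
Proof.
rewrite mulr_suml; apply: eq_bigr => x _; rewrite mulr_sumr; apply: eq_bigr => y _.
by rewrite mulrACA.
Qed.

Lemma bil_sum K (u : I -> R) (a b : 'I_K -> I -> R) (c : 'I_K -> R) :
  \sum_x \sum_y u x * u y * (\sum_(k < K) c k * (a k x * b k y)) =
  \sum_(k < K) c k * ((\sum_x u x * a k x) * (\sum_y u y * b k y)).
Proof.
under eq_bigr => x _ do under eq_bigr => y _ do rewrite mulr_sumr.
under eq_bigr => x _ do rewrite exchange_big /=.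
rewrite exchange_big /=; apply: eq_bigr => k _.
rewrite -bil mulr_sumr; apply: eq_bigr => x _; rewrite mulr_sumr; apply: eq_bigr => y _.
by rewrite mulrCA.
Qed.
End QF.

Lemma hess_eq (R : realType) (p q n np : nat) (F : 'I_n -> 'M[R]_(p, q))
  (G : 'I_np -> 'M[R]_(p, q)) (n0 : (0 < n)%N) th i j :
  hessian (Lf F G) th i j = Hf F i.1 i.2 j.1 j.2 th.
Proof.
rewrite /hessian.
have -> : 'D_(delta_mx i.1 i.2) (Lf F G) = D1f F G i.1 i.2.
  by apply/funext => t; exact: D1E.
exact: D2E.
Qed.

Lemma Hf_sym (R : realType) (p q n : nat) (F : 'I_n -> 'M[R]_(p, q)) i j i2 j2 th :
  Hf F i j i2 j2 th = Hf F i2 j2 i j th.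
Proof.
rewrite /Hf; congr (_ / _ - _ / _); last by rewrite mulrC.
by apply: eq_bigr => k _; rewrite (mulrC (F k i j)).
Qed.

Lemma mxOf_sym (R : realType) (I : finType) (M : I -> I -> R) :
  (forall x y, M x y = M y x) -> (mxOf M)^T = mxOf M.
Proof. by move=> H; apply/matrixP => i j; rewrite !mxE H. Qed.

Lemma lmin_empty (R : realType) (A : 'M[R]_0) : lambda_min A = 0.
Proof.
rewrite /lambda_min.
have -> : [set a : R | eigenvalue A a] = set0.
  apply/seteqP; split => // a /= /eigenvalueP [v _ v0].
  by move: v0; rewrite (thinmx0 v) eqxx.
exact: inf0.
Qed.

Section QF2.
Variable R : realType.
Variable I : finType.
Variable K : nat.
Variable v : 'rV[R]_#|I|.
Local Notation u x := (v 0 (enum_rank x)).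

Lemma qfH (f : 'I_K -> I -> R) (e : 'I_K -> R) (Ss : R) (M : I -> I -> R) :
  (forall x y, M x y = (\sum_(k < K) f k x * f k y * e k) / Ss -
      (\sum_(k < K) f k x * e k) * (\sum_(k < K) f k y * e k) / Ss ^+ 2) ->
  (v *m mxOf M *m v^T) 0 0 =
  \sum_(k < K) (e k / Ss) * (\sum_x u x * f k x) ^+ 2 -
  (\sum_(k < K) (e k / Ss) * \sum_x u x * f k x) ^+ 2.
Proof.
move=> HM; rewrite qf_mxOf.
have HM2 : forall x y, M x y =
   \sum_(k < K) (e k / Ss) * (f k x * f k y) -
   (\sum_(k < K) (e k / Ss) * f k x) * (\sum_(k < K) (e k / Ss) * f k y).
  move=> x y; rewrite HM; congr (_ - _).
    by rewrite mulr_suml; apply: eq_bigr => k _; ring.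
  have E1 : forall z, \sum_(k < K) (e k / Ss) * f k z = (\sum_(k < K) f k z * e k) / Ss.
    by move=> z; rewrite mulr_suml; apply: eq_bigr => k _; rewrite mulrC mulrA.
  rewrite !E1 expr2 invfM; ring.
under eq_bigr => x _ do under eq_bigr => y _ do rewrite HM2 mulrBr.
under eq_bigr => x _ do rewrite sumrB.
rewrite sumrB bil_sum bil; congr (_ - _).
have E2 : forall (z : I -> 'I_K -> R),
    \sum_x u x * \sum_(k < K) z x k = \sum_(k < K) \sum_x u x * z x k.
  by move=> z; rewrite exchange_big /=; apply: eq_bigr => x _; rewrite mulr_sumr.
rewrite expr2 !E2; congr (_ * _); apply: eq_bigr => k _;
  by rewrite mulr_sumr; apply: eq_bigr => x _; rewrite mulrCA.
Qed.

Lemma qfC (g : 'I_K -> I -> R) (M : I -> I -> R) :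
  (forall x y, M x y = scov g x y) ->
  (v *m mxOf M *m v^T) 0 0 =
  \sum_(k < K) K%:R^-1 *
     (\sum_x u x * g k x - (\sum_(j < K) \sum_x u x * g j x) / K%:R) ^+ 2.
Proof.
move=> HM; rewrite qf_mxOf.
have HM2 : forall x y, M x y = \sum_(k < K) K%:R^-1 * ((g k x - smean g x) * (g k y - smean g y)).
  by move=> x y; rewrite HM /scov mulr_suml; apply: eq_bigr => k _; rewrite mulrC.
under eq_bigr => x _ do under eq_bigr => y _ do rewrite HM2.
rewrite bil_sum; apply: eq_bigr => k _; rewrite expr2; congr (_ * (_ * _));
  rewrite /smean; under eq_bigr => x _ do rewrite mulrBr; rewrite sumrB; congr (_ - _).
all: have EX : \sum_(j < K) \sum_x u x * g j x = \sum_x \sum_(j < K) u x * g j x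
  by exact: exchange_big.
all: rewrite EX mulr_suml; apply: eq_bigr => x _.
all: by rewrite -mulr_sumr mulrA.
Qed.
End QF2.

Lemma lmin_empty0 (R : realType) n (A : 'M[R]_n) : n = 0%N -> lambda_min A = 0.
Proof. by move=> n0; move: A; rewrite n0 => A; exact: lmin_empty. Qed.

Theorem proposition7
  (R : realType) (m b : nat) (psi : R -> R -> 'rV[R]_b)
  (d : measure_display) (Omega : measurableType d) (Pr : probability Omega R)
  (P Q : probability (m.-tuple R) R)
  (np nq : nat) (xp : 'I_np -> Omega -> m.-tuple R) (xq : 'I_nq -> Omega -> m.-tuple R)
  (theta_star : par R m b)
  (Cmin Cmax Cratio : R) (Cf : 'I_(nE m) -> R)
  (Dmax1 Dmax2 Dmin2 delta_nq : R) :
  (0 < np)%N -> (0 < nq)%N ->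
  (* x_p^(i) i.i.d. P, x_q^(i) i.i.d. Q (all samples jointly independent) *)
  (forall i, measurable_fun setT (xp i)) ->
  (forall i, measurable_fun setT (xq i)) ->
  (forall i A, measurable A -> Pr (xp i @^-1` A) = P A) ->
  (forall i A, measurable A -> Pr (xq i @^-1` A) = Q A) ->
  mutually_independent Pr (joint_sample xp xq) ->
  (* theta_star is the true parameter: p = q r(.; theta_star) *)
  (forall A, measurable A ->
     P A = (\int[Q]_(x in A) (rpop psi Q theta_star x)%:E)%E) ->
  (* (A7) *)
  (forall delta : par R m b, enorm delta <= enorm theta_star ->
     (forall x, 0 < Cmin /\ Cmin <= rpop psi Q (theta_star + delta) x
                /\ rpop psi Q (theta_star + delta) x <= Cmax) /\
     (forall (w : Omega) x,
        Cratio^-1 <= rhat psi (xq ^~ w) (theta_star + delta) x /\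
        rhat psi (xq ^~ w) (theta_star + delta) x <= Cratio)) ->
  (forall t x, enorm (row t (feat psi x)) <= Cf t) ->
  (* (A8), probability-one part *)
  {ae Pr, forall w,
     (forall t : 'I_(nE m),
        (\sum_(i < nq) enorm (row t (feat psi (xq i w)))) / nq%:R <= Dmax1) /\
     specnorm (mxOf (smom2 (fun i => fvec psi (xq i w)))) <= Dmax2 /\
     specnorm (mxOf (scov (fun i => fvec psi (xq i w)))) <= Dmax2} ->
  (* (A8), part holding with probability 1 - delta_nq *)
  0 < Dmin2 ->
  (exists E : set Omega, measurable E /\ ((1 - delta_nq)%:E <= Pr E)%E /\
     forall w, E w ->
       Dmin2 <= lambda_min
         (mxOf (scov (fun i => fvecS psi (S := supp theta_star) (xq i w))))) ->
  (* conclusion *)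
  forall delta : par R m b, enorm delta <= enorm theta_star ->
  exists E : set Omega, measurable E /\ ((1 - delta_nq)%:E <= Pr E)%E /\
    forall w, E w ->
      Dmin2 / Cratio ^+ 2 <= lambda_min
        (mxOf (fun i j : Sidx b (supp theta_star) =>
           hessian (loss psi (xp ^~ w) (xq ^~ w)) (theta_star + delta)
                   (val i) (val j))).
Proof.
move=> np0 nq0 _ _ _ _ _ _ A7 _ _ Dmin0 [E [mE [PE HE]]] delta hdelta.
exists E; split => //; split => // w Ew.
have [_ A7r] := A7 delta hdelta.
have HEw := HE w Ew.
set S := supp theta_star in HEw *.
set th := theta_star + delta in A7r *.
pose F k := feat psi (xq k w).
pose Gp k := feat psi (xp k w).
pose e k := expR (dotp th (F k)).
pose Ss := \sum_(k < nq) e k.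
have Ss0 : 0 < Ss := sumexp_gt0 nq0 _.
have nqR : (0 : R) < nq%:R by rewrite ltr0n.
have rhE : forall k, rhat psi (xq ^~ w) th (xq k w) = e k / (Ss / nq%:R) by [].
have [Cr0 Cr1] : 0 < Cratio /\ 1 <= Cratio.
  have [h1 h2] := A7r w (xq (Ordinal nq0) w).
  rewrite rhE in h1 h2.
  have pos : 0 < e (Ordinal nq0) / (Ss / nq%:R) by rewrite divr_gt0 ?expR_gt0 ?divr_gt0.
  have C0 : 0 < Cratio by apply: lt_le_trans h2.
  split => //.
  have h3 := le_trans h1 h2.
  rewrite -(ler_pM2r C0) mulVf ?gt_eqF // in h3.
  nra.
set Cm := mxOf _ in HEw.
set Hm := mxOf _.
have symC : Cm^T = Cm.
  apply: mxOf_sym => x y; rewrite /scov; congr (_ / _).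
  by apply: eq_bigr => k _; rewrite mulrC.
have HmE : forall x y : Sidx b S, hessian (loss psi (xp ^~ w) (xq ^~ w)) th (val x) (val y) =
    Hf F (val x).1 (val x).2 (val y).1 (val y).2 th.
  by move=> x y; exact: (@hess_eq R _ _ _ _ F Gp nq0).
have symH : Hm^T = Hm.
  by apply: mxOf_sym => x y; rewrite !HmE Hf_sym.
have [N0|Npos] := eqVneq #|{: Sidx b S}| 0%N.
  by move: HEw; rewrite (lmin_empty0 Cm N0) => /(lt_le_trans Dmin0); rewrite ltxx.
have Np : (0 < #|{: Sidx b S}|)%N by rewrite lt0n.
have KEY : forall v : 'rV[R]_#|{: Sidx b S}|, (v *m Cm *m v^T) 0 0 / Cratio <= (v *m Hm *m v^T) 0 0.
  move=> v.
  rewrite (@qfC R (Sidx b S) nq v (fun k x => fvecS psi (S:=S) (xq k w) x) _ (fun x y => erefl)).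
  rewrite (@qfH R (Sidx b S) nq v (fun k (x : Sidx b S) => F k (val x).1 (val x).2) e Ss); last first.
    by move=> x y; rewrite HmE.
  pose Gk k := \sum_(x : Sidx b S) v 0 (enum_rank x) * F k (val x).1 (val x).2.
  have a0 : 0 <= Cratio^-1 / nq%:R by rewrite divr_ge0 // ?invr_ge0 ltW.
  have p1 : \sum_(k < nq) e k / Ss = 1 by rewrite -mulr_suml divff // gt_eqF.
  have ap : forall k, Cratio^-1 / nq%:R <= e k / Ss.
    move=> k; have [h1 _] := A7r w (xq k w); rewrite rhE in h1.
    rewrite ler_pdivrMr // (le_trans h1) //.
    by rewrite invf_div mulrA le_eqVlt; apply/orP; left; apply/eqP; rewrite mulrAC.
  have VI := @var_ineq R nq Gk (fun k => e k / Ss) _ a0 p1 ap.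
  apply: le_trans VI.
  rewrite le_eqVlt; apply/orP; left; apply/eqP.
  rewrite -mulr_sumr mulrC mulrA; congr (_ * _).
apply: lb_le_inf.
  by have [a Ha] := eig_ex symH Np; exists a.
move=> a /= /eigenvalueP [v va v0].
have qH : (v *m Hm *m v^T) 0 0 = a * (v *m v^T) 0 0 by rewrite va -scalemxAl mxE.
have vv0 := vv_gt0 v0.
have RC := ray symC v.
have K1 := KEY v.
rewrite qH in K1.
have : Dmin2 / Cratio ^+ 2 * (v *m v^T) 0 0 <= a * (v *m v^T) 0 0.
  apply: le_trans K1.
  have -> : Dmin2 / Cratio ^+ 2 * (v *m v^T) 0 0 = (Dmin2 / Cratio * (v *m v^T) 0 0) / Cratio.
    by rewrite expr2 invfM; ring.
  rewrite ler_pM2r ?invr_gt0 //.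
  apply: le_trans RC; apply: ler_wpM2r; first exact: ltW.
  apply: le_trans HEw; rewrite ler_pdivrMr //.
  by rewrite ler_peMr // ltW.
by rewrite ler_pM2r.
Qed.
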